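(* Let $\alpha>1$, $M>0$, $c_0>0$, $T>0$, and $c=\alpha^{-1/(\alpha-1)}$. Define for $0\le t<T$, $\rho\ge0$, $$\underline m(t,\rho)=\begin{cases}0,& \rho<c_0-\alpha^{1/\alpha}M(T-t)^{1/\alpha},\\ \Big(M^{\frac\alpha{\alpha-1}}-c\,\dfrac{(c_0-\rho)^{\frac\alpha{\alpha-1}}}{(T-t)^{\frac1{\alpha-1}}}\Big)^{\frac{\alpha-1}\alpha}, & c_0-\alpha^{1/\alpha}M(T-t)^{1/\alpha}\le\rho<c_0,\\ M,&\rho\ge c_0.\end{cases}$$ Then $\underline m$ is continuous and satisfies the viscosity subsolution inequality $p_1+(p_2)_+^\alpha\,\underline m(t,\rho)\le0$ for all $(t,\rho)\in(0,T)\times(0,\infty)$ and all $(p_1,p_2)\in D^+\underline m(t,\rho)$.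
   Context: Fréchet superdifferential: $D^+f(x)=\{p\in\mathbb R^n:\limsup_{y\to x}\frac{f(y)-f(x)-p\cdot(y-x)}{|y-x|}\le0\}$. The equation is the mass equation $m_t+m(m_\rho)_+^\alpha=0$ for radial solutions in a volume variable $\rho$. *)

(* Defs.v *)
From Stdlib Require Import Reals Lra.
Open Scope R_scope.

(* Real power x^y for x >= 0, with the convention 0^y = 0 (correct for y > 0).
   Stdlib's Rpower 0 y = exp (y * ln 0) = 1, so we guard it. *)
Definition rpow (x y : R) : R := if Rlt_dec 0 x then Rpower x y else 0.

Definition pos_part (x : R) : R := Rmax x 0.

Definition dist2 (t rho s r : R) : R := sqrt ((s - t)^2 + (r - rho)^2).

Definition cst (alpha : R) : R := rpow alpha (- (1 / (alpha - 1))).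

Definition mlow (alpha M c0 T : R) (t rho : R) : R :=
  if Rlt_dec rho (c0 - rpow alpha (1 / alpha) * M * rpow (T - t) (1 / alpha)) then 0
  else if Rlt_dec rho c0 then
    rpow (rpow M (alpha / (alpha - 1))
          - cst alpha * rpow (c0 - rho) (alpha / (alpha - 1)) / rpow (T - t) (1 / (alpha - 1)))
         ((alpha - 1) / alpha)
  else M.

(* Frechet superdifferential of f : R^2 -> R at (t, rho):
   limsup_{y -> x} (f y - f x - p.(y - x)) / |y - x| <= 0, unfolded. *)
Definition superdiff (f : R -> R -> R) (t rho p1 p2 : R) : Prop :=
  forall eps, 0 < eps -> exists delta, 0 < delta /\
    forall s r, 0 < dist2 t rho s r < delta ->
      f s r - f t rho - (p1 * (s - t) + p2 * (r - rho)) <= eps * dist2 t rho s r.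

Definition continuous_on2 (D : R -> R -> Prop) (f : R -> R -> R) : Prop :=
  forall t rho, D t rho -> forall eps, 0 < eps -> exists delta, 0 < delta /\
    forall s r, D s r -> dist2 t rho s r < delta -> Rabs (f s r - f t rho) < eps.

(* Main.v *)
Require Import Defs.
From Stdlib Require Import Reals.
From Stdlib Require Import Lra.
From Coquelicot Require Import Coquelicot.
Open Scope R_scope.

Lemma rpow_pos x y : 0 < x -> rpow x y = Rpower x y.
Proof. intros H; unfold rpow; destruct (Rlt_dec 0 x); [auto|lra]. Qed.
Lemma rpow_nonpos x y : x <= 0 -> rpow x y = 0.
Proof. intros H; unfold rpow; destruct (Rlt_dec 0 x); [lra|auto]. Qed.
Lemma Rpower_pos x y : 0 < Rpower x y.
Proof. unfold Rpower; apply exp_pos. Qed.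
Lemma rpow_ge0 x y : 0 <= rpow x y.
Proof. unfold rpow; destruct (Rlt_dec 0 x); [left; apply Rpower_pos|lra]. Qed.

Lemma rpow_cont y x : 0 < y -> continuous (fun z => rpow z y) x.
Proof.
  intros Hy.
  destruct (Rlt_le_dec 0 x) as [Hx|Hx].
  - apply continuous_ext_loc with (fun z => exp (y * ln z)).
    + assert (Hp : 0 < x) by exact Hx.
      exists (mkposreal x Hp). intros z Hz.
      change (Rabs (z - x) < x) in Hz.
      rewrite rpow_pos; [reflexivity|].
      apply Rabs_def2 in Hz; lra.
    + apply continuous_exp_comp.
      apply (continuous_scal_r y (fun z => ln z)).
      now apply continuous_ln.
  - apply filterlim_locally. intros eps.
    rewrite (rpow_nonpos x y Hx).
    assert (Hd : 0 < Rpower eps (/ y)) by apply Rpower_pos.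
    exists (mkposreal _ Hd). intros z Hz.
    change (Rabs (z - x) < Rpower eps (/ y)) in Hz.
    change (Rabs (rpow z y - 0) < eps).
    destruct (Rlt_le_dec 0 z) as [Hz0|Hz0].
    + rewrite rpow_pos by exact Hz0. rewrite Rminus_0_r, Rabs_pos_eq by (left; apply Rpower_pos).
      apply Rabs_def2 in Hz.
      replace (pos eps) with (Rpower (Rpower eps (/ y)) y).
      * apply Rlt_Rpower_l; [exact Hy| lra].
      * rewrite Rpower_mult. replace (/ y * y) with 1 by (field; lra).
        apply Rpower_1, cond_pos.
    + rewrite rpow_nonpos by exact Hz0. rewrite Rminus_0_r, Rabs_R0. apply cond_pos.
Qed.
Lemma exp_comb x y z : exp x * exp y / exp z = exp (x + y - z).
Proof. unfold Rminus. rewrite !exp_plus, exp_Ropp. unfold Rdiv. ring. Qed.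

Lemma thrlem a M tau : 1 < a -> 0 < M -> 0 < tau ->
  cst a * Rpower (Rpower a (1/a) * M * Rpower tau (1/a)) (a/(a-1)) / Rpower tau (1/(a-1))
  = Rpower M (a/(a-1)).
Proof.
  intros Ha HM Ht. unfold cst. rewrite rpow_pos by lra.
  assert (H1 : 0 < Rpower a (1/a)) by apply Rpower_pos.
  assert (H2 : 0 < Rpower tau (1/a)) by apply Rpower_pos.
  unfold Rpower at 1 2 5.
  rewrite !ln_mult by (try apply Rmult_lt_0_compat; auto).
  unfold Rpower. rewrite !ln_exp. rewrite exp_comb. f_equal. field. lra.
Qed.

Definition G (a M c0 T t rho : R) : R :=
  rpow (rpow M (a / (a - 1))
          - cst a * rpow (c0 - rho) (a / (a - 1)) / rpow (T - t) (1 / (a - 1)))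
         ((a - 1) / a).

Lemma cst_pos a : 1 < a -> 0 < cst a.
Proof. intros; unfold cst; rewrite rpow_pos by lra; apply Rpower_pos. Qed.

Lemma inner_sign a M tau w : 1 < a -> 0 < M -> 0 < tau ->
  let thr := Rpower a (1/a) * M * Rpower tau (1/a) in
  let inner := Rpower M (a/(a-1)) - cst a * rpow w (a/(a-1)) / Rpower tau (1/(a-1)) in
  (w < thr -> 0 < inner) /\ (thr <= w -> inner <= 0).
Proof.
  intros Ha HM Ht thr inner.
  assert (Hthr : 0 < thr) by (unfold thr; repeat apply Rmult_lt_0_compat; auto; apply Rpower_pos).
  assert (Hb : 0 < a/(a-1)) by (apply Rdiv_lt_0_compat; lra).
  assert (HE : 0 < Rpower tau (1/(a-1))) by apply Rpower_pos.
  assert (Hc := cst_pos a Ha).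
  assert (Hi : inner = cst a / Rpower tau (1/(a-1)) * (Rpower thr (a/(a-1)) - rpow w (a/(a-1)))).
  { unfold inner. rewrite <- (thrlem a M tau) by auto. fold thr. field. lra. }
  assert (Hk : 0 < cst a / Rpower tau (1/(a-1))) by (apply Rdiv_lt_0_compat; auto).
  split; intros Hw; rewrite Hi.
  - apply Rmult_lt_0_compat; auto.
    destruct (Rlt_le_dec 0 w).
    + rewrite rpow_pos by auto. assert (Rpower w (a/(a-1)) < Rpower thr (a/(a-1))) by (apply Rlt_Rpower_l; lra). lra.
    + rewrite rpow_nonpos by auto. assert (H := Rpower_pos thr (a/(a-1))). lra.
  - rewrite rpow_pos by lra.
    assert (Rpower thr (a/(a-1)) <= Rpower w (a/(a-1))) by (apply Rle_Rpower_l; lra).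
    assert (0 <= Rpower w (a / (a - 1)) - Rpower thr (a / (a - 1))) by lra.
    replace (Rpower thr (a / (a - 1)) - Rpower w (a / (a - 1))) with (- (Rpower w (a / (a - 1)) - Rpower thr (a / (a - 1)))) by ring.
    rewrite Ropp_mult_distr_r_reverse. apply Rge_le, Ropp_0_le_ge_contravar, Rmult_le_pos; lra.
Qed.

Lemma G_M a M c0 T t rho : 1 < a -> 0 < M -> c0 <= rho -> G a M c0 T t rho = M.
Proof.
  intros Ha HM Hr. unfold G. rewrite (rpow_nonpos (c0 - rho)) by lra.
  rewrite (rpow_pos M) by lra. unfold Rdiv at 2. rewrite Rmult_0_r, Rmult_0_l, Rminus_0_r.
  rewrite rpow_pos by apply Rpower_pos. rewrite Rpower_mult.
  replace (a / (a - 1) * ((a - 1) / a)) with 1 by (field; lra). apply Rpower_1; lra.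
Qed.

Lemma G_mlow a M c0 T t rho : 1 < a -> 0 < M -> t < T ->
  mlow a M c0 T t rho = G a M c0 T t rho.
Proof.
  intros Ha HM Ht. unfold mlow.
  destruct (Rlt_dec rho _) as [H1|H1].
  - rewrite (rpow_pos (T - t)) in H1 by lra. rewrite (rpow_pos a) in H1 by lra.
    destruct (inner_sign a M (T - t) (c0 - rho) Ha HM ltac:(lra)) as [_ H].
    unfold G. rewrite rpow_nonpos; [reflexivity|].
    rewrite (rpow_pos M) by lra. rewrite (rpow_pos (T - t)) by lra. apply H. lra.
  - destruct (Rlt_dec rho c0); [reflexivity|].
    symmetry; apply G_M; lra.
Qed.

Lemma G_ge0 a M c0 T t rho : 0 <= G a M c0 T t rho.
Proof. apply rpow_ge0. Qed.

Lemma G_cont a M c0 T t rho : 1 < a -> t < T ->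
  continuous (fun p : R * R => G a M c0 T (fst p) (snd p)) (t, rho).
Proof.
  intros Ha Ht. unfold G.
  apply continuous_comp with (g := fun z => rpow z ((a - 1) / a)).
  2: apply rpow_cont; apply Rdiv_lt_0_compat; lra.
  assert (Hq : continuous (fun p : R * R => rpow (c0 - snd p) (a / (a - 1))) (t, rho)).
  { apply continuous_comp with (g := fun z => rpow z (a / (a - 1))).
    2: apply rpow_cont; apply Rdiv_lt_0_compat; lra.
    apply (continuous_minus (fun _ : R * R => c0) snd). apply continuous_const. apply continuous_snd. }
  assert (He : continuous (fun p : R * R => / rpow (T - fst p) (1 / (a - 1))) (t, rho)).
  { apply continuous_comp with (g := fun z => / rpow z (1 / (a - 1))).
    - apply (continuous_minus (fun _ : R * R => T) fst). apply continuous_const. apply continuous_fst.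
    - simpl. apply continuous_Rinv_comp. apply rpow_cont; apply Rdiv_lt_0_compat; lra.
      rewrite rpow_pos by lra. apply Rgt_not_eq, Rpower_pos. }
  apply (continuous_minus (fun _ : R * R => rpow M (a / (a - 1)))). apply continuous_const.
  apply (continuous_mult (fun p : R*R => cst a * rpow (c0 - snd p) (a / (a - 1)))); [|exact He].
  apply (continuous_mult (fun _ : R*R => cst a)); [apply continuous_const| exact Hq].
Qed.

Lemma abs_le_dist x y : Rabs x <= sqrt (x ^ 2 + y ^ 2).
Proof.
  rewrite <- sqrt_Rsqr_abs. apply sqrt_le_1_alt. unfold Rsqr. simpl.
  assert (0 <= y * (y * 1)) by nra. lra.
Qed.

Lemma part1 a M c0 T : 1 < a -> 0 < M ->
  continuous_on2 (fun t rho => 0 <= t < T /\ 0 <= rho) (mlow a M c0 T).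
Proof.
  intros Ha HM t rho [[Ht0 Ht] Hr] eps Heps.
  destruct (proj1 (filterlim_locally _ _) (G_cont a M c0 T t rho Ha Ht) (mkposreal eps Heps)) as [e He].
  exists e. split; [apply cond_pos|].
  intros s r [[Hs0 Hs] _] Hd.
  rewrite !G_mlow by auto.
  apply (He (s, r)). unfold dist2 in Hd. split.
  - change (Rabs (s - t) < e). eapply Rle_lt_trans; [apply abs_le_dist|exact Hd].
  - change (Rabs (r - rho) < e). eapply Rle_lt_trans; [|exact Hd].
    rewrite Rplus_comm. apply abs_le_dist.
Qed.

Lemma oneside (F : R -> R) x p d :
  (forall eps, 0 < eps -> exists delta, 0 < delta /\
     forall h, 0 < Rabs h < delta -> F (x + h) - F x - p * h <= eps * Rabs h) ->
  (forall eps, 0 < eps -> exists delta, 0 < delta /\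
     forall h, - delta < h < 0 -> (d + eps) * h <= F (x + h) - F x) ->
  p <= d.
Proof.
  intros Hs Hd. destruct (Rle_lt_dec p d) as [|Hpd]; [auto|exfalso].
  set (e := (p - d) / 3). assert (He : 0 < e) by (unfold e; lra).
  destruct (Hs e He) as [d1 [Hd1 H1]]. destruct (Hd e He) as [d2 [Hd2 H2]].
  set (h := - Rmin d1 d2 / 2).
  assert (Hm : 0 < Rmin d1 d2) by (apply Rmin_pos; auto).
  assert (Hm1 := Rmin_l d1 d2). assert (Hm2 := Rmin_r d1 d2).
  assert (Hh : Rabs h = - h) by (apply Rabs_left; unfold h; lra).
  specialize (H1 h ltac:(rewrite Hh; unfold h; lra)).
  specialize (H2 h ltac:(unfold h; lra)).
  rewrite Hh in H1.
  assert (h < 0) by (unfold h; lra).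
  assert ((d + 2 * e - p) * h <= 0) by nra.
  destruct (Rle_lt_dec (d + 2 * e - p) 0) as [Hn|Hn].
  { destruct Hn as [Hn|Hn]; [|unfold e in Hn; lra]. assert (0 < (-(d + 2 * e - p)) * (- h)) by (apply Rmult_lt_0_compat; lra). nra. }
  unfold e in *. lra.
Qed.

Lemma dist_t t rho h : dist2 t rho (t + h) rho = Rabs h.
Proof. unfold dist2. rewrite <- sqrt_Rsqr_abs. f_equal. unfold Rsqr. ring. Qed.
Lemma dist_r t rho h : dist2 t rho t (rho + h) = Rabs h.
Proof. unfold dist2. rewrite <- sqrt_Rsqr_abs. f_equal. unfold Rsqr. ring. Qed.

Lemma sd_t f t rho p1 p2 : superdiff f t rho p1 p2 ->
  forall eps, 0 < eps -> exists delta, 0 < delta /\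
     forall h, 0 < Rabs h < delta -> f (t + h) rho - f t rho - p1 * h <= eps * Rabs h.
Proof.
  intros H eps He. destruct (H eps He) as [d [Hd Hh]]. exists d; split; auto.
  intros h Hh'. specialize (Hh (t + h) rho). rewrite dist_t in Hh. specialize (Hh Hh').
  replace (p1 * h) with (p1 * (t + h - t) + p2 * (rho - rho)) by ring. exact Hh.
Qed.
Lemma sd_r f t rho p1 p2 : superdiff f t rho p1 p2 ->
  forall eps, 0 < eps -> exists delta, 0 < delta /\
     forall h, 0 < Rabs h < delta -> f t (rho + h) - f t rho - p2 * h <= eps * Rabs h.
Proof.
  intros H eps He. destruct (H eps He) as [d [Hd Hh]]. exists d; split; auto.
  intros h Hh'. specialize (Hh t (rho + h)). rewrite dist_r in Hh. specialize (Hh Hh').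
  replace (p2 * h) with (p1 * (t - t) + p2 * (rho + h - rho)) by ring. exact Hh.
Qed.

Lemma dini_deriv (F g : R -> R) x d delta0 : 0 < delta0 ->
  (forall h, - delta0 < h < 0 -> F (x + h) = g (x + h)) -> F x = g x ->
  derivable_pt_lim g x d ->
  forall eps, 0 < eps -> exists delta, 0 < delta /\
     forall h, - delta < h < 0 -> (d + eps) * h <= F (x + h) - F x.
Proof.
  intros H0 Hl Hx Hd eps He. destruct (Hd eps He) as [dl Hdl].
  exists (Rmin delta0 dl). split; [apply Rmin_pos; [auto| apply cond_pos]|].
  intros h Hh. assert (Hm1 := Rmin_l delta0 dl). assert (Hm2 := Rmin_r delta0 dl).
  rewrite Hl by lra. rewrite Hx.
  specialize (Hdl h ltac:(lra) ltac:(rewrite Rabs_left; lra)).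
  apply Rabs_def2 in Hdl. destruct Hdl as [Hu _].
  assert (Hq : (g (x + h) - g x) / h < d + eps) by lra.
  apply Rlt_le.
  replace (g (x + h) - g x) with ((g (x + h) - g x) / h * h) by (field; lra).
  set (q := (g (x + h) - g x) / h) in *.
  assert (0 < (d + eps - q) * (- h)) by (apply Rmult_lt_0_compat; lra). nra.
Qed.

Lemma ident a lt lw lu : 1 < a ->
  - ((a-1)/a) * cst a * Rpower (exp lw) (a/(a-1)) * (1/(a-1)) / (exp lt * Rpower (exp lt) (1/(a-1)) * exp lu) * Rpower (exp lu) ((a-1)/a)
  + Rpower (cst a / Rpower (exp lt) (1/(a-1)) * Rpower (exp lw) (a/(a-1)) / (exp lw * exp lu) * Rpower (exp lu) ((a-1)/a)) a
    * Rpower (exp lu) ((a-1)/a) = 0.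
Proof.
  intros Ha. unfold cst. rewrite rpow_pos by lra.
  set (la := ln a).
  assert (Ea : exp la = a) by (apply exp_ln; lra).
  unfold Rpower. rewrite !ln_exp. fold la.
  assert (Hd2 : exp (- (1 / (a - 1)) * la) / exp (1 / (a - 1) * lt) * exp (a / (a - 1) * lw) / (exp lw * exp lu) * exp ((a - 1) / a * lu) = exp ((-(1/(a-1)) * la) + (a/(a-1) * lw) + -(1/(a-1) * lt) + - lw + - lu + ((a-1)/a * lu))).
  { rewrite !exp_plus, !exp_Ropp. field.
    repeat split; apply Rgt_not_eq, exp_pos. }
  assert (Hd1 : - ((a - 1) / a) * exp (- (1 / (a - 1)) * la) * exp (a / (a - 1) * lw) * (1 / (a - 1)) / (exp lt * exp (1 / (a - 1) * lt) * exp lu) * exp ((a - 1) / a * lu) = - exp (((-(1/(a-1)) * la) + (a/(a-1) * lw) + - lt + -(1/(a-1) * lt) + - lu + ((a-1)/a * lu)) + - la)).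
  { rewrite !exp_plus, !exp_Ropp, Ea. field.
    repeat split; try apply Rgt_not_eq, exp_pos; lra. }
  rewrite Hd1, Hd2. rewrite ln_exp. rewrite <- exp_plus.
  replace (a * (- (1 / (a - 1)) * la + a / (a - 1) * lw + - (1 / (a - 1) * lt) + - lw + - lu + (a - 1) / a * lu) + (a - 1) / a * lu)
    with (- (1 / (a - 1)) * la + a / (a - 1) * lw + - lt + - (1 / (a - 1) * lt) + - lu + (a - 1) / a * lu + - la)
    by (field; lra).
  ring.
Qed.

Lemma deriv1 A B T t g p : 0 < T - t -> 0 < A - B / Rpower (T - t) g ->
  derivable_pt_lim (fun s => Rpower (A - B / Rpower (T - s) g) p) t
    (- p * B * g / ((T - t) * Rpower (T - t) g * (A - B / Rpower (T - t) g)) * Rpower (A - B / Rpower (T - t) g) p).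
Proof.
  intros Ht Hu. apply is_derive_Reals. unfold Rpower. auto_derive.
  - unfold Rpower in Hu. repeat split; auto; [apply Rgt_not_eq, exp_pos].
  - unfold Rpower in Hu. change (T + - t) with (T - t).
    set (E := exp (g * ln (T - t))) in *.
    change (A + - (B * / E)) with (A - B / E).
    assert (E <> 0) by (apply Rgt_not_eq, exp_pos).
    assert (HE : 0 < E) by apply exp_pos.
    assert (HAE : A * E - B = (A - B / E) * E) by (field; lra).
    assert (0 < (A - B / E) * E) by (apply Rmult_lt_0_compat; lra).
    field. repeat split; lra.
Qed.

Lemma deriv2 A C c0 rho b p : 0 < c0 - rho -> 0 < A - C * Rpower (c0 - rho) b ->
  derivable_pt_lim (fun r => Rpower (A - C * Rpower (c0 - r) b) p) rho
    (p * b * C * Rpower (c0 - rho) b / ((c0 - rho) * (A - C * Rpower (c0 - rho) b)) * Rpower (A - C * Rpower (c0 - rho) b) p).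
Proof.
  intros Ht Hu. apply is_derive_Reals. unfold Rpower. auto_derive.
  - unfold Rpower in Hu. split; [exact Ht|split; [exact Hu|exact I]].
  - unfold Rpower in Hu. change (c0 + - rho) with (c0 - rho).
    set (W := exp (b * ln (c0 - rho))) in *.
    change (A + - (C * W)) with (A - C * W).
    field. repeat split; lra.
Qed.

Lemma exp_le' x y : x <= y -> exp x <= exp y.
Proof. intros [H|H]; [left; apply exp_increasing; auto| subst; lra]. Qed.

Lemma L1 a M u : 1 < a -> 0 < M -> 0 < u -> u <= Rpower M (a/(a-1)) ->
  u <= Rpower u ((a-1)/a) * Rpower M (a/(a-1) - 1).
Proof.
  intros Ha HM Hu Hle.
  assert (Hl : ln u <= a/(a-1) * ln M).
  { unfold Rpower in Hle. rewrite <- (ln_exp (a/(a-1) * ln M)). apply ln_le; auto. }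
  unfold Rpower. rewrite <- exp_plus. rewrite <- (exp_ln u) at 1 by auto.
  apply exp_le'.
  assert (Hb : (a/(a-1) - 1) * ln M = / a * (a/(a-1) * ln M)) by (field; lra).
  assert (Hc : (a-1)/a * ln u = ln u - / a * ln u) by (field; lra).
  rewrite Hb, Hc.
  assert (/ a * ln u <= / a * (a / (a - 1) * ln M)).
  { apply Rmult_le_compat_l; auto. left; apply Rinv_0_lt_compat; lra. }
  lra.
Qed.

Lemma chord a M c0 T t : 1 < a -> 0 < M -> t < T ->
  forall eps, 0 < eps -> exists delta, 0 < delta /\ forall h, - delta < h < 0 ->
    (0 + eps) * h <= G a M c0 T t (c0 + h) - G a M c0 T t c0.
Proof.
  intros Ha HM Ht eps He.
  rewrite (G_M a M c0 T t c0) by lra.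
  set (tau := T - t). assert (Htau : 0 < tau) by (unfold tau; lra).
  set (thr := Rpower a (1/a) * M * Rpower tau (1/a)).
  assert (Hthr : 0 < thr) by (unfold thr; repeat apply Rmult_lt_0_compat; auto; apply Rpower_pos).
  set (E := Rpower tau (1/(a-1))). assert (HE : 0 < E) by apply Rpower_pos.
  set (C := cst a / E). assert (HC : 0 < C) by (apply Rdiv_lt_0_compat; auto; apply cst_pos; auto).
  set (P := Rpower M (a/(a-1) - 1)). assert (HP : 0 < P) by apply Rpower_pos.
  set (Q := eps * P / C). assert (HQ : 0 < Q) by (unfold Q; apply Rdiv_lt_0_compat; auto; apply Rmult_lt_0_compat; auto).
  assert (Hd : 0 < Rpower Q (a - 1)) by apply Rpower_pos.
  exists (Rmin thr (Rpower Q (a - 1))). split; [apply Rmin_pos; auto|].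
  intros h Hh. assert (Hm1 := Rmin_l thr (Rpower Q (a - 1))). assert (Hm2 := Rmin_r thr (Rpower Q (a - 1))).
  set (k := - h). assert (Hk : 0 < k) by (unfold k; lra).
  destruct (inner_sign a M tau k Ha HM Htau) as [Hpos _].
  fold thr in Hpos. specialize (Hpos ltac:(unfold k; lra)).
  unfold G. replace (c0 - (c0 + h)) with k by (unfold k; ring).
  fold tau. rewrite (rpow_pos M) by lra. rewrite (rpow_pos tau) by lra. fold E.
  rewrite (rpow_pos k) in * by lra.
  set (u := Rpower M (a / (a - 1)) - cst a * Rpower k (a / (a - 1)) / E) in *.
  rewrite rpow_pos by auto.
  assert (Hu1 : u <= Rpower M (a/(a-1))).
  { unfold u. assert (0 <= cst a * Rpower k (a / (a - 1)) / E).
    { apply Rlt_le, Rdiv_lt_0_compat; auto. apply Rmult_lt_0_compat; [apply cst_pos; auto| apply Rpower_pos]. }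
    lra. }
  assert (HL1 := L1 a M u Ha HM Hpos Hu1). fold P in HL1.
  assert (HAM : Rpower M (a/(a-1)) = M * P).
  { unfold P. rewrite <- (Rpower_1 M) at 2 by auto. rewrite <- Rpower_plus. f_equal; ring. }
  assert (HkB : Rpower k (a/(a-1)) = k * Rpower k (a/(a-1) - 1)).
  { rewrite <- (Rpower_1 k) at 2 by auto. rewrite <- Rpower_plus. f_equal; ring. }
  assert (HkQ : Rpower k (a/(a-1) - 1) <= Q).
  { apply Rle_trans with (Rpower (Rpower Q (a - 1)) (a/(a-1) - 1)).
    - apply Rle_Rpower_l; [assert (a/(a-1) - 1 = 1/(a-1)) by (field; lra); rewrite H; left; apply Rdiv_lt_0_compat; lra|unfold k; lra].
    - rewrite Rpower_mult. replace ((a - 1) * (a / (a - 1) - 1)) with 1 by (field; lra).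
      rewrite Rpower_1; lra. }
  assert (Hu : u = M * P - C * k * Rpower k (a/(a-1) - 1)).
  { unfold u, C. rewrite HAM, HkB. field. lra. }
  assert (Hr : u / P <= Rpower u ((a - 1) / a)).
  { apply (Rmult_le_reg_r P); auto. unfold Rdiv. rewrite Rmult_assoc, Rinv_l by lra. lra. }
  assert (Hu2 : u / P = M - C * k * Rpower k (a/(a-1) - 1) / P) by (rewrite Hu; field; lra).
  assert (Hb : C * k * Rpower k (a/(a-1) - 1) / P <= eps * k).
  { apply (Rmult_le_reg_r P); auto. unfold Rdiv. rewrite Rmult_assoc, Rinv_l, Rmult_1_r by lra.
    assert (C * k * Rpower k (a / (a - 1) - 1) <= C * k * Q).
    { apply Rmult_le_compat_l; auto. apply Rmult_le_pos; lra. }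
    assert (C * k * Q = eps * k * P) by (unfold Q; field; lra). lra. }
  unfold k in *. lra.
Qed.

Lemma part2 a M c0 T : 1 < a -> 0 < M ->
  forall t rho p1 p2, 0 < t < T -> 0 < rho ->
     superdiff (mlow a M c0 T) t rho p1 p2 ->
     p1 + rpow (pos_part p2) a * mlow a M c0 T t rho <= 0.
Proof.
  intros Ha HM t rho p1 p2 [Ht0 Ht] Hr Hsd.
  assert (Hst := sd_t _ _ _ _ _ Hsd). assert (Hsr := sd_r _ _ _ _ _ Hsd).
  rewrite G_mlow by auto.
  destruct (Rle_lt_dec c0 rho) as [Hc|Hc].
  -
    assert (Hp1 : p1 <= 0).
    { apply (oneside (fun s => mlow a M c0 T s rho) t p1 0 Hst).
      intros eps He. exists 1. split; [lra|]. intros h Hh.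
      rewrite !G_mlow by lra. rewrite !G_M by lra.
      assert (0 < eps * (- h)) by (apply Rmult_lt_0_compat; lra). nra. }
    assert (Hp2 : p2 <= 0).
    { apply (oneside (fun r => mlow a M c0 T t r) rho p2 0 Hsr).
      destruct Hc as [Hc|Hc].
      - intros eps He. exists (rho - c0). split; [lra|]. intros h Hh.
        rewrite !G_mlow by lra. rewrite !G_M by lra.
        assert (0 < eps * (- h)) by (apply Rmult_lt_0_compat; lra). nra.
      - subst rho. intros eps He. destruct (chord a M c0 T t Ha HM Ht eps He) as [d [Hd Hh]].
        exists d. split; auto. intros h Hh'. rewrite !G_mlow by lra. apply Hh; auto. }
    rewrite G_M by lra. unfold pos_part. rewrite Rmax_right by lra.
    rewrite rpow_nonpos by lra. lra.
  - set (tau := T - t). assert (Htau : 0 < tau) by (unfold tau; lra).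
    set (w := c0 - rho). assert (Hw : 0 < w) by (unfold w; lra).
    set (thr := Rpower a (1/a) * M * Rpower tau (1/a)).
    destruct (Rlt_le_dec w thr) as [Hwt|Hwt].
    +
      set (b := a / (a - 1)). set (g := 1 / (a - 1)). set (pw := (a - 1) / a).
      set (A := Rpower M b). set (E := Rpower tau g). set (W := Rpower w b).
      set (u := A - cst a * W / E).
      destruct (inner_sign a M tau w Ha HM Htau) as [Hpos _]. specialize (Hpos Hwt).
      fold b g A E in Hpos. rewrite (rpow_pos w) in Hpos by lra. fold W u in Hpos.
      assert (HG : G a M c0 T t rho = Rpower u pw).
      { unfold G. fold b g pw tau w. rewrite (rpow_pos M), (rpow_pos tau), (rpow_pos w) by lra.
        fold A E W u. apply rpow_pos; auto. }
      assert (HE : 0 < E) by apply Rpower_pos.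
      assert (HW : 0 < W) by apply Rpower_pos.
      assert (Hcs := cst_pos a Ha).
      set (d1 := - pw * (cst a * W) * g / (tau * E * u) * Rpower u pw).
      assert (Hp1 : p1 <= d1).
      { apply (oneside (fun s => mlow a M c0 T s rho) t p1 d1 Hst).
        apply (dini_deriv (fun s => mlow a M c0 T s rho) (fun s => Rpower (A - cst a * W / Rpower (T - s) g) pw) t d1 1).
        - lra.
        - intros h Hh. rewrite G_mlow by lra. unfold G. fold b g pw w.
          rewrite (rpow_pos M), (rpow_pos (T - (t + h))), (rpow_pos w) by lra. fold A W.
          apply rpow_pos.
          destruct (inner_sign a M (T - (t + h)) w Ha HM ltac:(lra)) as [Hp _].
          fold b g A in Hp. rewrite (rpow_pos w) in Hp by lra. fold W in Hp.
          apply Hp. apply Rlt_le_trans with thr; auto. unfold thr.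
          apply Rmult_le_compat_l. { apply Rmult_le_pos; [left; apply Rpower_pos|lra]. }
          apply Rle_Rpower_l; [left; apply Rdiv_lt_0_compat; lra| unfold tau; lra].
        - rewrite G_mlow by lra. rewrite HG. reflexivity.
        - apply deriv1; [fold tau; lra| fold tau E; exact Hpos]. }
      set (C := cst a / E).
      set (d2 := pw * b * C * W / (w * u) * Rpower u pw).
      assert (Hp2 : p2 <= d2).
      { apply (oneside (fun r => mlow a M c0 T t r) rho p2 d2 Hsr).
        apply (dini_deriv (fun r => mlow a M c0 T t r) (fun r => Rpower (A - C * Rpower (c0 - r) b) pw) rho d2 (thr - w)).
        - lra.
        - intros h Hh. rewrite G_mlow by lra. unfold G. fold b g pw tau.
          rewrite (rpow_pos M), (rpow_pos tau), (rpow_pos (c0 - (rho + h))) by (unfold w in *; lra). fold A E.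
          rewrite rpow_pos.
          + f_equal. unfold C. field. lra.
          + destruct (inner_sign a M tau (c0 - (rho + h)) Ha HM Htau) as [Hp _].
            fold thr in Hp. fold b g E A in Hp. rewrite (rpow_pos (c0 - (rho + h))) in Hp by (unfold w in *; lra).
            apply Hp. unfold w in *; lra.
        - rewrite G_mlow by lra. rewrite HG. unfold u, C. f_equal. fold w W. field. lra.
        - replace d2 with (pw * b * C * Rpower (c0 - rho) b / ((c0 - rho) * (A - C * Rpower (c0 - rho) b)) * Rpower (A - C * Rpower (c0 - rho) b) pw).
          + apply deriv2; fold w; auto. fold W. replace (A - C * W) with u; auto. unfold u, C. field; lra.
          + unfold d2. fold w W. replace (A - C * W) with u; auto. unfold u, C. field; lra. }
      assert (Hm : 0 < Rpower u pw) by apply Rpower_pos.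
      assert (Hd2 : 0 < d2).
      { unfold d2. apply Rmult_lt_0_compat; auto. apply Rdiv_lt_0_compat; [|apply Rmult_lt_0_compat; auto].
        assert (0 < pw) by (unfold pw; apply Rdiv_lt_0_compat; lra).
        assert (0 < b) by (unfold b; apply Rdiv_lt_0_compat; lra).
        assert (0 < C) by (unfold C; apply Rdiv_lt_0_compat; lra).
        apply Rmult_lt_0_compat; [apply Rmult_lt_0_compat; [apply Rmult_lt_0_compat|]|]; auto. }
      assert (Hid : d1 + Rpower d2 a * Rpower u pw = 0).
      { assert (H := ident a (ln tau) (ln w) (ln u) Ha).
        rewrite !exp_ln in H by auto. fold b g pw E W in H.
        replace d2 with (cst a / E * W / (w * u) * Rpower u pw).
        - replace d1 with (- pw * cst a * W * g / (tau * E * u) * Rpower u pw); [exact H|].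
          unfold d1. field. lra.
        - unfold d2, C, pw, b. field. lra. }
      assert (Hpp : rpow (pos_part p2) a <= Rpower d2 a).
      { unfold pos_part. destruct (Rle_lt_dec p2 0).
        - rewrite Rmax_right by lra. rewrite rpow_nonpos by lra. left; apply Rpower_pos.
        - rewrite Rmax_left by lra. rewrite rpow_pos by lra. apply Rle_Rpower_l; lra. }
      rewrite HG.
      assert (rpow (pos_part p2) a * Rpower u pw <= Rpower d2 a * Rpower u pw) by (apply Rmult_le_compat_r; lra).
      lra.
    +
      assert (HG0 : G a M c0 T t rho = 0).
      { destruct (inner_sign a M tau w Ha HM Htau) as [_ Hneg]. specialize (Hneg Hwt).
        unfold G. apply rpow_nonpos. fold tau w. rewrite (rpow_pos M), (rpow_pos tau) by lra. exact Hneg. }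
      assert (Hp1 : p1 <= 0).
      { apply (oneside (fun s => mlow a M c0 T s rho) t p1 0 Hst).
        intros eps He. exists 1. split; [lra|]. intros h Hh.
        rewrite !G_mlow by lra. rewrite HG0.
        assert (0 <= G a M c0 T (t + h) rho) by apply G_ge0.
        assert (0 < eps * (- h)) by (apply Rmult_lt_0_compat; lra). nra. }
      rewrite HG0. lra.
Qed.

Theorem mainTheorem7 (alpha M c0 T : R) :
  1 < alpha -> 0 < M -> 0 < c0 -> 0 < T ->
  continuous_on2 (fun t rho => 0 <= t < T /\ 0 <= rho) (mlow alpha M c0 T) /\
  (forall t rho p1 p2, 0 < t < T -> 0 < rho ->
     superdiff (mlow alpha M c0 T) t rho p1 p2 ->
     p1 + rpow (pos_part p2) alpha * mlow alpha M c0 T t rho <= 0).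
Proof.
  intros Ha HM Hc0 HT. split.
  - apply part1; auto.
  - apply part2; auto.
Qed.
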